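(* In the Simon urn described in the context, with fixed trigger probability $p\in(0,1)$, for every color index $c\ge2$ and every time $n\ge2$, $$\Pr(K_{n,c}=0)=\binom{n-2}{c-2}p^{c-2}(1-p)^{n-c+1}+\sum_{r=1}^{c-2}\binom{n-2}{r-1}p^{r-1}(1-p)^{n-r-1},$$ with the convention that $\binom{m}{k}=0$ when $k>m$ or $k<0$.
   Context: Simon urn. The urn is empty at time $0$. Let $B_0=1$ and let $(B_n)_{n\ge1}$ be i.i.d. Bernoulli random variables with $\Pr(B_n=1)=p\in(0,1)$, independent of everything else. Colors are labelled $1,2,\dots$ in order of first appearance. At each time $n\ge1$: if $B_{n-1}=1$, one ball of a new color (not yet present) is added to the urn and this color is registered; if $B_{n-1}=0$, a ball is drawn uniformly at random from the urn, its color is registered, and one additional ball of that color is added. Thus the urn contains $n$ balls at time $n$. $K_{n,c}$ denotes the number of times color $c$ has been registered up to and including time $n$ (equal to the number of balls of color $c$ in the urn at time $n$), and $K_{n,c}=0$ if color $c$ has not yet appeared. *)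

(* Defs.v *)
(* The Simon urn is encoded as a discrete-time Markov chain on
   states (s, b): s = sequence of the colors of the balls in the urn (in order
   of addition), b = the trigger bit B_n to be used at the next step.
   Expectations of functions of the state at time n are computed exactly by
   iterating the transition operator (backward equation). *)
From mathcomp Require Import all_boot all_order all_algebra.
Set Implicit Arguments. Unset Strict Implicit. Unset Printing Implicit Defensive.
Import Order.TTheory GRing.Theory Num.Theory.
Local Open Scope ring_scope.

Section SimonUrn.
Variable R : realFieldType.
Variable p : R.

(* label of a new color: colors are labelled 1,2,... in order of first appearance *)
Definition new_color (s : seq nat) : nat := (size (undup s)).+1.

(* Transition operator: (urn_step g) (s, b) = E[ g(state at next time) | current state (s,b) ]. *)
Definition urn_step (g : seq nat -> bool -> R) (s : seq nat) (b : bool) : R :=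
  let add x := p * g (rcons s x) true + (1 - p) * g (rcons s x) false in
  if b then add (new_color s)
  else (size s)%:R^-1 * \sum_(j < size s) add (nth 0%N s j).

Fixpoint urn_expect (n : nat) (g : seq nat -> bool -> R) : R :=
  match n with
  | 0 => g [::] true
  | n'.+1 => urn_expect n' (urn_step g)
  end.

Definition K (s : seq nat) (c : nat) : nat := count_mem c s.

Definition prob_K_zero (n c : nat) : R :=
  urn_expect n (fun s _ => if K s c == 0%N then 1 else 0).

End SimonUrn.

(* Main.v *)
Require Import Defs.
From mathcomp Require Import all_boot all_order all_algebra.
From mathcomp Require Import ring lra zify.
Import Order.TTheory GRing.Theory Num.Theory.
Local Open Scope ring_scope.

Section Aux.
Variable R : realFieldType.
Variable p : R.

Definition step2 (h : nat -> bool -> R) (d : nat) (b : bool) : R :=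
  p * h (d + b)%N true + (1 - p) * h (d + b)%N false.

Definition Inv (s : seq nat) (b : bool) : Prop :=
  (forall x, (x \in s) = (0 < x <= size (undup s))%N) /\ (b || (0 < size s)%N).

Lemma size_undup_eqi (s1 s2 : seq nat) : s1 =i s2 -> size (undup s1) = size (undup s2).
Proof.
move=> e; apply: perm_size; apply: uniq_perm; rewrite ?undup_uniq // => x.
by rewrite !mem_undup e.
Qed.

Lemma inv_old s b x b' : Inv s b -> x \in s -> Inv (rcons s x) b' /\ size (undup (rcons s x)) = size (undup s).
Proof.
move=> [H _] xs.
have e : rcons s x =i s by move=> y; rewrite mem_rcons in_cons; case: eqP => // ->.
have E : size (undup (rcons s x)) = size (undup s) by apply: size_undup_eqi.
split=> //; split; last by rewrite size_rcons orbT.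
by move=> y; rewrite e E H.
Qed.

Lemma inv_new s b b' : Inv s b -> Inv (rcons s (new_color s)) b' /\ size (undup (rcons s (new_color s))) = (size (undup s)).+1.
Proof.
move=> [H _].
have nx : new_color s \notin s by rewrite H /new_color ltnn andbF.
have e : rcons s (new_color s) =i new_color s :: s by exact: mem_rcons.
have E : size (undup (rcons s (new_color s))) = size (undup (new_color s :: s)) by apply: size_undup_eqi.
rewrite /= (negbTE nx) /= in E.
split=> //; split; last by rewrite size_rcons orbT.
move=> y; rewrite e E in_cons H /new_color.
case: eqP => [->|/eqP ne] /=; first by rewrite leqnn.
move: ne; case: (0 < y)%N => /= ne; last by []. 
by rewrite [in RHS]leq_eqVlt (negbTE ne).
Qed.

Lemma reduce n (g : seq nat -> bool -> R) (h : nat -> bool -> R) :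
  (forall s b, Inv s b -> g s b = h (size (undup s)) b) ->
  forall s b, Inv s b -> iter n (urn_step p) g s b = iter n step2 h (size (undup s)) b.
Proof.
move=> Hg; elim: n => [|n IH] s b Hs /=; first exact: Hg.
rewrite /urn_step /step2; case: b Hs => Hs.
  have [I1 E1] := inv_new s true true Hs.
  have [I2 _] := inv_new s true false Hs.
  by rewrite !IH // E1 addn1.
have [_ /= pos] := Hs.
rewrite (eq_bigr (fun _ => p * iter n step2 h (size (undup s)) true +
   (1 - p) * iter n step2 h (size (undup s)) false)); last first.
  move=> j _; have xs : nth 0%N s j \in s by rewrite mem_nth.
  have [I1 E1] := inv_old s false _ true Hs xs.
  have [I2 _] := inv_old s false _ false Hs xs.
  by rewrite !IH // E1.
rewrite sumr_const card_ord -[X in _ * X]mulr_natl mulrA mulVf ?mul1r ?addn0 //.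
by rewrite pnatr_eq0 -lt0n.
Qed.

Definition Q (m t : nat) : R := \sum_(k < t) ('C(m, k))%:R * p ^+ k * (1 - p) ^+ (m - k).

Lemma Q0 t : Q 0 t = if (0 < t)%N then 1 else 0.
Proof.
rewrite /Q; case: t => [|t]; first by rewrite big_ord0.
rewrite big_ord_recl big1 ?addr0 /=; first by rewrite bin0 expr0 !mulr1.
by move=> i _; rewrite bin0n /= mul0r mul0r.
Qed.

Lemma Qrec m t : Q m.+1 t = p * Q m t.-1 + (1 - p) * Q m t.
Proof.
rewrite /Q; case: t => [|t]; first by rewrite !big_ord0 !mulr0 addr0.
rewrite !big_ord_recl /= !bin0 !expr0 !mul1r !subn0 mulrDr addrCA -exprS; congr (_ + _).
rewrite !mulr_sumr -big_split /=; apply: eq_bigr => i _.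
rewrite /bump /= !add1n binS natrD mulrDl mulrDl addrC; congr (_ + _).
  case: (leqP i.+1 m) => lim.
    rewrite subSS; have -> : (m - i = (m - i.+1).+1)%N by lia.
    rewrite [(1 - p) ^+ _.+1]exprS; ring.
  by rewrite bin_small // mul0r !mul0r mulr0.
rewrite subSS [p ^+ _.+1]exprS; ring.
Qed.

Lemma iterQ (c : nat) n : forall d b,
  iter n.+1 step2 (fun d _ => if (d < c)%N then 1 else 0) d b = Q n (c - (d + b)).
Proof.
elim: n => [|n IH] d b.
  rewrite Q0 /= /step2 -mulrDl addrC subrK mul1r subn_gt0.
  by case: ifP.
rewrite iterS {1}/step2 -/step2 !IH Qrec addn0 addn1 subnS.
by [].
Qed.

Lemma urn_expect_iter n : forall g, urn_expect p n g = iter n (urn_step p) g [::] true.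
Proof.
elim: n => [|n IH] g //=.
by rewrite IH -iterSr.
Qed.
End Aux.
Theorem lemma4p1 (R : realFieldType) (p : R) (hp0 : 0 < p) (hp1 : p < 1)
  (c n : nat) (hc : (2 <= c)%N) (hn : (2 <= n)%N) :
  prob_K_zero p n c =
    ('C(n - 2, c - 2))%:R * p ^+ (c - 2) * (1 - p) ^+ (n.+1 - c)
    + \sum_(1 <= r < c.-1) ('C(n - 2, r - 1))%:R * p ^+ (r - 1) * (1 - p) ^+ (n - r - 1).
Proof.
case: n hn => [|[|m]] // _; case: c hc => [|[|c]] // _.
rewrite /prob_K_zero urn_expect_iter (@reduce R p _ _ (fun d _ => if (d < c.+2)%N then 1 else 0)); last 2 first.
- move=> s b [H _]; rewrite /K.
  have -> : (count_mem c.+2 s == 0%N) = (c.+2 \notin s) by apply/eqP/idP => /count_memPn.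
  by rewrite H /= -ltnNge.
- by split=> // x; rewrite in_nil /=; case: x.
rewrite iterQ /= Qrec /= /Q big_ord_recr /= !subSS.
rewrite big_add1 /= big_mkord.
rewrite !subn0 [X in _ = _ + X](eq_bigr (fun k : 'I_c => ('C(m, k))%:R * p ^+ k * (1 - p) ^+ (m - k))); last first.
  by move=> i _; rewrite subn1 /= (_ : (m.+2 - i.+1 - 1 = m - i)%N) //; lia.
case: (leqP c m) => cm.
  have -> : (m.+1 - c = (m - c).+1)%N by lia.
  rewrite exprS; ring.
rewrite bin_small //; ring.
Qed.
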